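(* Let $p\in(0,1]$ and let $(\mathcal M,d,0)$ be a pointed $p$-metric space with $\mathcal M=\{0,x,y\}$ (three distinct points). Put $d_x=d(x,0)$, $d_y=d(y,0)$, $d_{xy}=d(x,y)$. Then for all $a,b\in\mathbb R$, \[\|a\delta(x)+b\delta(y)\|_{\mathcal F_p(\mathcal M)}^p=\min\{|ad_x|^p+|bd_y|^p,\ |(a+b)d_x|^p+|bd_{xy}|^p,\ |(a+b)d_y|^p+|ad_{xy}|^p\}.\]
   Context: A $p$-metric space is a set with $d$ such that $d^p$ is a metric; pointed means a distinguished point $0$. A $p$-Banach space is a complete vector space with a $p$-norm. $\delta(x)$ is evaluation at $x$ on real functions on $\mathcal M$ vanishing at $0$, and $\mathcal F_p(\mathcal M)$ is the completion of $\mathrm{span}\{\delta(x)\}$ under $\|\sum a_i\delta(x_i)\|=\sup\|\sum a_if(x_i)\|_Y$ over $p$-Banach $Y$ and $1$-Lipschitz $f:\mathcal M\to Y$ with $f(0)=0$. *)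

(* Defs.v *)
From Stdlib Require Import Reals List.
From Coquelicot Require Import Coquelicot.
Open Scope R_scope.

Definition rpow (x p : R) : R := if Rle_dec x 0 then 0 else Rpower x p.

Definition is_pmetric (p : R) {T : Type} (d : T -> T -> R) : Prop :=
  (forall u v, 0 <= d u v) /\
  (forall u v, d u v = 0 <-> u = v) /\
  (forall u v, d u v = d v u) /\
  (forall u v w, rpow (d u w) p <= rpow (d u v) p + rpow (d v w) p).

Record pBanach (p : R) := mkPBanach {
  pb_space :> ModuleSpace R_Ring;
  pb_norm : pb_space -> R;
  pb_nonneg : forall v, 0 <= pb_norm v;
  pb_zero : forall v, pb_norm v = 0 <-> v = zero;
  pb_hom : forall (t : R) v, pb_norm (scal t v) = Rabs t * pb_norm v;
  pb_ptri : forall v w,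
      rpow (pb_norm (plus v w)) p <= rpow (pb_norm v) p + rpow (pb_norm w) p;
  pb_complete : forall u : nat -> pb_space,
      (forall eps, 0 < eps -> exists N : nat, forall m n : nat,
          (N <= m)%nat -> (N <= n)%nat -> pb_norm (minus (u m) (u n)) < eps) ->
      exists l, forall eps, 0 < eps -> exists N : nat, forall n : nat,
          (N <= n)%nat -> pb_norm (minus (u n) l) < eps
}.
Arguments pb_norm {p} _ _.

(* Evaluation of the finite combination sum_i a_i delta(x_i) at f. *)
Definition eval_comb {T : Type} {Y : ModuleSpace R_Ring} (f : T -> Y)
  (mu : list (R * T)) : Y :=
  fold_right (fun c acc => plus (scal (fst c) (f (snd c))) acc) zero mu.

Definition Fp_values (p : R) {T : Type} (d : T -> T -> R) (z : T)
  (mu : list (R * T)) : R -> Prop :=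
  fun t => exists (Y : pBanach p) (f : T -> Y),
      f z = zero /\
      (forall u v, pb_norm Y (minus (f u) (f v)) <= d u v) /\
      t = pb_norm Y (eval_comb f mu).

(* The F_p(M) norm of sum a_i delta(x_i): the supremum of the above set. *)
Definition Fp_norm (p : R) {T : Type} (d : T -> T -> R) (z : T)
  (mu : list (R * T)) : Rbar :=
  Lub_Rbar (Fp_values p d z mu).

(* Main.v *)
Require Import Defs.
From Stdlib Require Import Reals List Lra Psatz ClassicalDescription.
From Coquelicot Require Import Coquelicot.
Open Scope R_scope.

Lemma rpow_0 e : rpow 0 e = 0.
Proof. unfold rpow. destruct (Rle_dec 0 0); lra. Qed.

Lemma rpow_pos x e : 0 < x -> rpow x e = Rpower x e.
Proof. intros. unfold rpow. destruct (Rle_dec x 0); lra. Qed.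

Lemma Rpower_gt0 x e : 0 < Rpower x e.
Proof. unfold Rpower. apply exp_pos. Qed.

Lemma rpow_ge0 x e : 0 <= rpow x e.
Proof. unfold rpow. destruct (Rle_dec x 0). lra. left; apply Rpower_gt0. Qed.

Lemma rpow_gt0 x e : 0 < x -> 0 < rpow x e.
Proof. intros. rewrite rpow_pos; auto. apply Rpower_gt0. Qed.

Lemma rpow_eq0 x e : 0 <= x -> rpow x e = 0 -> x = 0.
Proof. intros H H0. destruct H; auto. pose proof (rpow_gt0 x e H). lra. Qed.

Lemma rpow_le x y e : 0 < e -> 0 <= x <= y -> rpow x e <= rpow y e.
Proof.
  intros He [[Hx|Hx] Hxy].
  - rewrite !rpow_pos by lra. apply Rle_Rpower_l; lra.
  - subst. rewrite rpow_0. apply rpow_ge0.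
Qed.

Lemma rpow_lt x y e : 0 < e -> 0 <= x < y -> rpow x e < rpow y e.
Proof.
  intros He [[Hx|Hx] Hxy].
  - rewrite !rpow_pos by lra. apply Rlt_Rpower_l; lra.
  - subst. rewrite rpow_0. apply rpow_gt0; lra.
Qed.

Lemma rpow_le_inv x y e : 0 < e -> 0 <= x -> 0 <= y -> rpow x e <= rpow y e -> x <= y.
Proof.
  intros He Hx Hy H. destruct (Rle_dec x y); auto.
  assert (rpow y e < rpow x e) by (apply rpow_lt; lra). lra.
Qed.

Lemma rpow_lt_inv x y e : 0 < e -> 0 <= x -> 0 <= y -> rpow x e < rpow y e -> x < y.
Proof.
  intros He Hx Hy H. destruct (Rlt_dec x y); auto.
  assert (rpow y e <= rpow x e) by (apply rpow_le; lra). lra.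
Qed.

Lemma rpow_inv x e : e <> 0 -> 0 <= x -> rpow (rpow x e) (/ e) = x.
Proof.
  intros He [Hx|Hx].
  - rewrite (rpow_pos x) by lra. rewrite rpow_pos by apply Rpower_gt0.
    rewrite Rpower_mult. rewrite Rinv_r by auto. apply Rpower_1; auto.
  - subst. rewrite !rpow_0. auto.
Qed.

Lemma rpow_inv' x e : e <> 0 -> 0 <= x -> rpow (rpow x (/ e)) e = x.
Proof.
  intros He Hx. rewrite <- (Rinv_inv e) at 2. apply rpow_inv; auto.
  apply Rinv_neq_0_compat; auto.
Qed.

Lemma rpow_mult x y e : 0 <= x -> 0 <= y -> rpow (x * y) e = rpow x e * rpow y e.
Proof.
  intros [Hx|Hx] [Hy|Hy].
  - rewrite !rpow_pos by nra. rewrite Rpower_mult_distr; auto.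
  - subst. rewrite Rmult_0_r, !rpow_0. ring.
  - subst. rewrite Rmult_0_l, !rpow_0. ring.
  - subst. rewrite Rmult_0_l, !rpow_0. ring.
Qed.

Lemma exp_conv p L : 0 <= p <= 1 -> exp (p * L) <= 1 - p + p * exp L.
Proof.
  intros Hp.
  assert (H1 := exp_ineq1_le ((1 - p) * L)).
  assert (H2 := exp_ineq1_le (- (p * L))).
  assert (E1 : exp L = exp (p * L) * exp ((1-p) * L)) by (rewrite <- exp_plus; f_equal; ring).
  assert (E2 : 1 = exp (p * L) * exp (- (p * L))) by (rewrite <- exp_plus; replace (p * L + - (p * L)) with 0 by ring; rewrite exp_0; auto).
  assert (HE := exp_pos (p * L)).
  assert (A1 : exp (p * L) * (1 + (1 - p) * L) <= exp L) by (rewrite E1; apply Rmult_le_compat_l; lra).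
  assert (A2 : exp (p * L) * (1 + - (p * L)) <= 1) by (rewrite E2 at 2; apply Rmult_le_compat_l; lra).
  nra.
Qed.

Lemma rpow_tangent p x w : 0 < p <= 1 -> 0 <= x -> 0 < w ->
  rpow x p <= rpow w p * (1 - p + p * (x / w)).
Proof.
  intros Hp [Hx|Hx] Hw.
  - rewrite !rpow_pos by auto. unfold Rpower.
    assert (x / w = exp (ln x - ln w)).
    { unfold Rminus. rewrite exp_plus, exp_Ropp, !exp_ln by auto. reflexivity. }
    rewrite H.
    replace (p * ln x) with (p * ln w + p * (ln x - ln w)) by ring.
    rewrite exp_plus. apply Rmult_le_compat_l. left; apply exp_pos.
    apply exp_conv; lra.
  - subst. rewrite rpow_0. unfold Rdiv. rewrite Rmult_0_l, Rmult_0_r, Rplus_0_r.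
    apply Rmult_le_pos. apply rpow_ge0. lra.
Qed.

Lemma rpow_concave p l u v : 0 < p <= 1 -> 0 <= l <= 1 -> 0 <= u -> 0 <= v ->
  (1 - l) * rpow u p + l * rpow v p <= rpow ((1 - l) * u + l * v) p.
Proof.
  intros Hp Hl Hu Hv.
  set (w := (1 - l) * u + l * v).
  destruct (Rle_dec w 0).
  - assert (w = 0) by (unfold w in *; nra).
    assert (A : (1 - l) * rpow u p = 0).
    { destruct Hu as [Hu|Hu]. assert (1 - l = 0) by (unfold w in *; nra). rewrite H0; ring.
      subst u; rewrite rpow_0; ring. }
    assert (B : l * rpow v p = 0).
    { destruct Hv as [Hv|Hv]. assert (l = 0) by (unfold w in *; nra). rewrite H0; ring.
      subst v; rewrite rpow_0; ring. }
    rewrite A, B, H, rpow_0. lra.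
  - assert (Hw : 0 < w) by lra.
    pose proof (rpow_tangent p u w Hp Hu Hw).
    pose proof (rpow_tangent p v w Hp Hv Hw).
    apply Rle_trans with ((1 - l) * (rpow w p * (1 - p + p * (u / w))) + l * (rpow w p * (1 - p + p * (v / w)))).
    + apply Rplus_le_compat; apply Rmult_le_compat_l; lra.
    + right. assert (Hw' : (1-l)*u + l*v <> 0) by (unfold w in Hw; lra). unfold w. field. exact Hw'.
Qed.

Lemma rpow_subadd p u v : 0 < p <= 1 -> 0 <= u -> 0 <= v -> rpow (u + v) p <= rpow u p + rpow v p.
Proof.
  intros Hp Hu Hv. destruct (Rle_dec (u + v) 0).
  - assert (u + v = 0) by lra. rewrite H, rpow_0. pose proof (rpow_ge0 u p); pose proof (rpow_ge0 v p); lra.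
  - set (s := u + v). assert (Hs : 0 < s) by (unfold s; lra).
    pose proof (rpow_concave p (u / s) 0 s Hp) as A.
    pose proof (rpow_concave p (v / s) 0 s Hp) as B.
    rewrite rpow_0 in A, B.
    replace ((1 - u / s) * 0 + u / s * s) with u in A by (field; lra).
    replace ((1 - v / s) * 0 + v / s * s) with v in B by (field; lra).
    assert (0 <= u / s <= 1). { split. apply Rdiv_le_0_compat; lra. apply Rmult_le_reg_r with s; auto. unfold Rdiv. rewrite Rmult_assoc, Rinv_l by lra. unfold s; lra. }
    assert (0 <= v / s <= 1). { split. apply Rdiv_le_0_compat; lra. apply Rmult_le_reg_r with s; auto. unfold Rdiv. rewrite Rmult_assoc, Rinv_l by lra. unfold s; lra. }
    specialize (A H (Rle_refl 0) (Rlt_le _ _ Hs)).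
    specialize (B H0 (Rle_refl 0) (Rlt_le _ _ Hs)).
    assert (u / s * rpow s p + v / s * rpow s p = rpow s p) by (field_simplify; [unfold s; field|]; lra).
    lra.
Qed.
Definition Pk (p u : R) := rpow (Rabs u) p.

Lemma Pk_0 p : Pk p 0 = 0.
Proof. unfold Pk. rewrite Rabs_R0. apply rpow_0. Qed.
Lemma Pk_opp p u : Pk p (- u) = Pk p u.
Proof. unfold Pk. rewrite Rabs_Ropp. auto. Qed.
Lemma Pk_ge0 p u : 0 <= Pk p u.
Proof. apply rpow_ge0. Qed.
Lemma Pk_mono p u v : 0 < p -> Rabs u <= Rabs v -> Pk p u <= Pk p v.
Proof. intros. apply rpow_le; auto. split; auto. apply Rabs_pos. Qed.
Lemma Pk_add p u v : 0 < p <= 1 -> Pk p (u + v) <= Pk p u + Pk p v.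
Proof.
  intros Hp. unfold Pk. eapply Rle_trans. apply rpow_le. lra.
  split. apply Rabs_pos. apply Rabs_triang.
  apply rpow_subadd; auto; apply Rabs_pos.
Qed.
Lemma Pk_interp p l h1 h2 : 0 < p <= 1 -> 0 <= l <= 1 -> 0 <= h1 * h2 ->
  (1 - l) * Pk p h1 + l * Pk p h2 <= Pk p ((1 - l) * h1 + l * h2).
Proof.
  intros Hp Hl Hh. unfold Pk.
  assert (E : Rabs ((1 - l) * h1 + l * h2) = (1 - l) * Rabs h1 + l * Rabs h2).
  { destruct (Rle_dec 0 h1).
    - destruct (Rle_dec 0 h2).
      + rewrite !Rabs_pos_eq; nra.
      + assert (h1 = 0) by nra. subst. rewrite Rabs_R0.
        rewrite Rabs_left1 by nra. rewrite (Rabs_left1 h2) by nra. ring.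
    - destruct (Rle_dec 0 h2).
      + assert (h2 = 0) by nra. subst. rewrite Rabs_R0.
        rewrite Rabs_left1 by nra. rewrite (Rabs_left1 h1) by nra. ring.
      + rewrite !Rabs_left1 by nra. ring. }
  rewrite E. apply rpow_concave; auto; apply Rabs_pos.
Qed.

Definition G p c1 k1 c2 k2 c3 k3 t :=
  Pk p ((t - c1) * k1) + Pk p ((t - c2) * k2) + Pk p ((t - c3) * k3).

Lemma G_interval p c1 k1 c2 k2 c3 k3 t1 t2 t : 0 < p <= 1 ->
  0 <= k1 -> 0 <= k2 -> 0 <= k3 -> t1 <= t <= t2 ->
  (c1 <= t1 \/ t2 <= c1) -> (c2 <= t1 \/ t2 <= c2) -> (c3 <= t1 \/ t2 <= c3) ->
  Rmin (G p c1 k1 c2 k2 c3 k3 t1) (G p c1 k1 c2 k2 c3 k3 t2) <= G p c1 k1 c2 k2 c3 k3 t.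
Proof.
  intros Hp H1 H2 H3 Ht S1 S2 S3.
  destruct (Req_dec t1 t2).
  { subst. assert (t = t2) by lra. subst. apply Rmin_l. }
  set (l := (t - t1) / (t2 - t1)).
  assert (Hl : 0 <= l <= 1).
  { unfold l; split. apply Rdiv_le_0_compat; lra.
    apply Rmult_le_reg_r with (t2 - t1). lra. unfold Rdiv. rewrite Rmult_assoc, Rinv_l by lra. lra. }
  assert (Et : t = (1 - l) * t1 + l * t2) by (unfold l; field; lra).
  assert (Hc : forall c k, 0 <= k -> (c <= t1 \/ t2 <= c) ->
     (1 - l) * Pk p ((t1 - c) * k) + l * Pk p ((t2 - c) * k) <= Pk p ((t - c) * k)).
  { intros c k Hk Sc.
    replace ((t - c) * k) with ((1 - l) * ((t1 - c) * k) + l * ((t2 - c) * k)) by (rewrite Et; ring).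
    apply Pk_interp; auto.
    replace ((t1 - c) * k * ((t2 - c) * k)) with (((t1 - c) * (t2 - c)) * (k * k)) by ring.
    apply Rmult_le_pos; [destruct Sc; nra | nra]. }
  pose proof (Hc c1 k1 H1 S1). pose proof (Hc c2 k2 H2 S2). pose proof (Hc c3 k3 H3 S3).
  unfold G. apply Rle_trans with ((1 - l) * (Pk p ((t1 - c1) * k1) + Pk p ((t1 - c2) * k2) + Pk p ((t1 - c3) * k3)) + l * (Pk p ((t2 - c1) * k1) + Pk p ((t2 - c2) * k2) + Pk p ((t2 - c3) * k3))).
  - set (A := Pk p ((t1 - c1) * k1) + Pk p ((t1 - c2) * k2) + Pk p ((t1 - c3) * k3)).
    set (B := Pk p ((t2 - c1) * k1) + Pk p ((t2 - c2) * k2) + Pk p ((t2 - c3) * k3)).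
    pose proof (Rmin_l A B). pose proof (Rmin_r A B). nra.
  - lra.
Qed.

Lemma G_rayl p c1 k1 c2 k2 c3 k3 t1 t : 0 < p ->
  0 <= k1 -> 0 <= k2 -> 0 <= k3 -> t <= t1 -> t1 <= c1 -> t1 <= c2 -> t1 <= c3 ->
  G p c1 k1 c2 k2 c3 k3 t1 <= G p c1 k1 c2 k2 c3 k3 t.
Proof.
  intros Hp H1 H2 H3 Ht S1 S2 S3. unfold G.
  assert (Hc : forall c k, 0 <= k -> t1 <= c -> Pk p ((t1 - c) * k) <= Pk p ((t - c) * k)).
  { intros c k Hk Sc. apply Pk_mono; auto. rewrite !Rabs_mult, (Rabs_pos_eq k) by auto.
    rewrite !Rabs_left1 by lra. nra. }
  pose proof (Hc c1 k1 H1 S1). pose proof (Hc c2 k2 H2 S2). pose proof (Hc c3 k3 H3 S3). lra.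
Qed.

Lemma G_rayr p c1 k1 c2 k2 c3 k3 t1 t : 0 < p ->
  0 <= k1 -> 0 <= k2 -> 0 <= k3 -> t1 <= t -> c1 <= t1 -> c2 <= t1 -> c3 <= t1 ->
  G p c1 k1 c2 k2 c3 k3 t1 <= G p c1 k1 c2 k2 c3 k3 t.
Proof.
  intros Hp H1 H2 H3 Ht S1 S2 S3. unfold G.
  assert (Hc : forall c k, 0 <= k -> c <= t1 -> Pk p ((t1 - c) * k) <= Pk p ((t - c) * k)).
  { intros c k Hk Sc. apply Pk_mono; auto. rewrite !Rabs_mult, (Rabs_pos_eq k) by auto.
    rewrite !Rabs_pos_eq by lra. nra. }
  pose proof (Hc c1 k1 H1 S1). pose proof (Hc c2 k2 H2 S2). pose proof (Hc c3 k3 H3 S3). lra.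
Qed.

Lemma G_key p c1 k1 c2 k2 c3 k3 t : 0 < p <= 1 ->
  0 <= k1 -> 0 <= k2 -> 0 <= k3 ->
  Rmin (G p c1 k1 c2 k2 c3 k3 c1) (Rmin (G p c1 k1 c2 k2 c3 k3 c2) (G p c1 k1 c2 k2 c3 k3 c3))
  <= G p c1 k1 c2 k2 c3 k3 t.
Proof.
  intros Hp H1 H2 H3.
  set (g := G p c1 k1 c2 k2 c3 k3).
  pose proof (Rmin_l (g c1) (Rmin (g c2) (g c3))).
  pose proof (Rmin_r (g c1) (Rmin (g c2) (g c3))).
  pose proof (Rmin_l (g c2) (g c3)). pose proof (Rmin_r (g c2) (g c3)).
  set (m := Rmin (g c1) (Rmin (g c2) (g c3))) in *.
  assert (Mi : forall u v, m <= g u -> m <= g v -> m <= Rmin (g u) (g v)).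
  { intros. unfold Rmin; destruct (Rle_dec (g u) (g v)); auto. }
  destruct (Rle_dec t c1), (Rle_dec t c2), (Rle_dec t c3), (Rle_dec c1 c2), (Rle_dec c1 c3), (Rle_dec c2 c3);
  first
  [ apply Rle_trans with (g c1); [lra | apply G_rayl; lra]
  | apply Rle_trans with (g c2); [lra | apply G_rayl; lra]
  | apply Rle_trans with (g c3); [lra | apply G_rayl; lra]
  | apply Rle_trans with (g c1); [lra | apply G_rayr; lra]
  | apply Rle_trans with (g c2); [lra | apply G_rayr; lra]
  | apply Rle_trans with (g c3); [lra | apply G_rayr; lra]
  | apply Rle_trans with (Rmin (g c1) (g c2)); [apply Mi; lra | apply G_interval; first [lra | left; lra | right; lra]]
  | apply Rle_trans with (Rmin (g c2) (g c1)); [apply Mi; lra | apply G_interval; first [lra | left; lra | right; lra]]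
  | apply Rle_trans with (Rmin (g c1) (g c3)); [apply Mi; lra | apply G_interval; first [lra | left; lra | right; lra]]
  | apply Rle_trans with (Rmin (g c3) (g c1)); [apply Mi; lra | apply G_interval; first [lra | left; lra | right; lra]]
  | apply Rle_trans with (Rmin (g c2) (g c3)); [apply Mi; lra | apply G_interval; first [lra | left; lra | right; lra]]
  | apply Rle_trans with (Rmin (g c3) (g c2)); [apply Mi; lra | apply G_interval; first [lra | left; lra | right; lra]]
  ].
Qed.
Definition Mt p kx ky kxy a b :=
  Rmin (Pk p (a * kx) + Pk p (b * ky))
       (Rmin (Pk p ((a + b) * kx) + Pk p (b * kxy)) (Pk p ((a + b) * ky) + Pk p (a * kxy))).

Definition Gf p kx ky kxy a b t := G p 0 kxy (- b) ky a kx t.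

Lemma Mt_G p kx ky kxy a b :
  Mt p kx ky kxy a b = Rmin (Gf p kx ky kxy a b 0) (Rmin (Gf p kx ky kxy a b (- b)) (Gf p kx ky kxy a b a)).
Proof.
  unfold Mt, Gf, G.
  replace ((0 - 0) * kxy) with 0 by ring. replace ((0 - - b) * ky) with (b * ky) by ring.
  replace ((0 - a) * kx) with (- (a * kx)) by ring.
  replace ((- b - 0) * kxy) with (- (b * kxy)) by ring. replace ((- b - - b) * ky) with 0 by ring.
  replace ((- b - a) * kx) with (- ((a + b) * kx)) by ring.
  replace ((a - 0) * kxy) with (a * kxy) by ring. replace ((a - - b) * ky) with ((a + b) * ky) by ring.
  replace ((a - a) * kx) with 0 by ring.
  rewrite !Pk_opp, !Pk_0. f_equal; [ring | f_equal; ring].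
Qed.

Lemma Mt_le p kx ky kxy a b t : 0 < p <= 1 -> 0 <= kx -> 0 <= ky -> 0 <= kxy ->
  Mt p kx ky kxy a b <= Gf p kx ky kxy a b t.
Proof. intros. rewrite Mt_G. unfold Gf. apply G_key; auto. Qed.

Lemma Mt_ex p kx ky kxy a b : exists t, Mt p kx ky kxy a b = Gf p kx ky kxy a b t.
Proof.
  rewrite Mt_G. unfold Rmin.
  destruct (Rle_dec _ _); [|destruct (Rle_dec _ _)]; try destruct (Rle_dec _ _); eauto.
Qed.

Lemma Mt_ge0 p kx ky kxy a b : 0 <= Mt p kx ky kxy a b.
Proof.
  unfold Mt. pose proof Pk_ge0. unfold Rmin.
  repeat destruct (Rle_dec _ _); pose proof (H p); clear H; repeat match goal with |- context [Pk p ?u] => pose proof (Pk_ge0 p u); generalize dependent (Pk p u); intros end; lra.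
Qed.

Lemma Mt_sub p kx ky kxy a b a' b' : 0 < p <= 1 -> 0 <= kx -> 0 <= ky -> 0 <= kxy ->
  Mt p kx ky kxy (a + a') (b + b') <= Mt p kx ky kxy a b + Mt p kx ky kxy a' b'.
Proof.
  intros Hp H1 H2 H3.
  destruct (Mt_ex p kx ky kxy a b) as [t1 E1]. destruct (Mt_ex p kx ky kxy a' b') as [t2 E2].
  rewrite E1, E2. eapply Rle_trans. apply (Mt_le _ _ _ _ _ _ (t1 + t2)); auto.
  unfold Gf, G.
  replace ((t1 + t2 - 0) * kxy) with ((t1 - 0) * kxy + (t2 - 0) * kxy) by ring.
  replace ((t1 + t2 - - (b + b')) * ky) with ((t1 - - b) * ky + (t2 - - b') * ky) by ring.
  replace ((t1 + t2 - (a + a')) * kx) with ((t1 - a) * kx + (t2 - a') * kx) by ring.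
  pose proof (Pk_add p ((t1 - 0) * kxy) ((t2 - 0) * kxy) Hp).
  pose proof (Pk_add p ((t1 - - b) * ky) ((t2 - - b') * ky) Hp).
  pose proof (Pk_add p ((t1 - a) * kx) ((t2 - a') * kx) Hp).
  lra.
Qed.

Lemma Rmin_scale c x y : 0 <= c -> Rmin (c * x) (c * y) = c * Rmin x y.
Proof.
  intros Hc. unfold Rmin. destruct (Rle_dec x y), (Rle_dec (c * x) (c * y)); auto.
  - destruct Hc as [Hc|Hc]. exfalso. apply n. apply Rmult_le_compat_l; lra. subst; ring.
  - destruct Hc as [Hc|Hc]. exfalso. apply n. apply Rmult_le_reg_l with c; lra. subst; ring.
Qed.

Lemma Pk_scale p l u : Pk p (l * u) = rpow (Rabs l) p * Pk p u.
Proof. unfold Pk. rewrite Rabs_mult. apply rpow_mult; apply Rabs_pos. Qed.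

Lemma Mt_hom p kx ky kxy l a b :
  Mt p kx ky kxy (l * a) (l * b) = rpow (Rabs l) p * Mt p kx ky kxy a b.
Proof.
  unfold Mt. rewrite <- !Rmin_scale by apply rpow_ge0.
  replace (l * a + l * b) with (l * (a + b)) by ring.
  rewrite !Rmult_assoc, !Pk_scale. f_equal; [ring | f_equal; ring].
Qed.

Lemma Mt_lower p kx ky kxy m a b : 0 < p <= 1 -> 0 <= m -> m <= kx -> m <= ky -> m <= kxy ->
  Pk p (a * m) <= Mt p kx ky kxy a b /\ Pk p (b * m) <= Mt p kx ky kxy a b.
Proof.
  intros Hp H0 H1 H2 H3. destruct (Mt_ex p kx ky kxy a b) as [t E]. rewrite E. unfold Gf, G.
  assert (Mo : forall u k, m <= k -> Pk p (u * m) <= Pk p (u * k)).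
  { intros u k Hk. apply Pk_mono. lra. rewrite !Rabs_mult, (Rabs_pos_eq m), (Rabs_pos_eq k) by lra.
    apply Rmult_le_compat_l. apply Rabs_pos. auto. }
  pose proof (Mo (t - 0) kxy H3). pose proof (Mo (t - - b) ky H2). pose proof (Mo (t - a) kx H1).
  pose proof (Pk_ge0 p ((t - 0) * kxy)). pose proof (Pk_ge0 p ((t - - b) * ky)). pose proof (Pk_ge0 p ((t - a) * kx)).
  split.
  - replace (a * m) with ((t - 0) * m + - ((t - a) * m)) by ring.
    pose proof (Pk_add p ((t - 0) * m) (- ((t - a) * m)) Hp) as HA. rewrite Pk_opp in HA. lra.
  - replace (b * m) with ((t - - b) * m + - ((t - 0) * m)) by ring.
    pose proof (Pk_add p ((t - - b) * m) (- ((t - 0) * m)) Hp) as HA. rewrite Pk_opp in HA. lra.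
Qed.

Lemma Pk_eq0 p u : Pk p u = 0 -> u = 0.
Proof.
  unfold Pk. intros H. apply rpow_eq0 in H; [|apply Rabs_pos].
  unfold Rabs in H. destruct (Rcase_abs u); lra.
Qed.

Lemma Mt_zero p kx ky kxy a b : 0 < p <= 1 -> 0 < kx -> 0 < ky -> 0 < kxy ->
  Mt p kx ky kxy a b = 0 -> a = 0 /\ b = 0.
Proof.
  intros Hp H1 H2 H3 H.
  set (m := Rmin kx (Rmin ky kxy)).
  assert (Hm : 0 < m) by (unfold m; repeat apply Rmin_glb_lt; auto).
  destruct (Mt_lower p kx ky kxy m a b Hp) as [A B]; try lra;
    try (unfold m; pose proof (Rmin_l kx (Rmin ky kxy)); pose proof (Rmin_r kx (Rmin ky kxy));
         pose proof (Rmin_l ky kxy); pose proof (Rmin_r ky kxy); lra).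
  rewrite H in A, B. pose proof (Pk_ge0 p (a * m)). pose proof (Pk_ge0 p (b * m)).
  assert (Za : Pk p (a * m) = 0) by lra. assert (Zb : Pk p (b * m) = 0) by lra.
  apply Pk_eq0 in Za. apply Pk_eq0 in Zb. split; nra.
Qed.

Definition V := prod_ModuleSpace R_Ring R_ModuleSpace R_ModuleSpace.

Definition Nv p kx ky kxy (v : V) : R := rpow (Mt p kx ky kxy (fst v) (snd v)) (/ p).

Lemma Mt_00 p kx ky kxy : Mt p kx ky kxy 0 0 = 0.
Proof.
  pose proof (Mt_hom p kx ky kxy 0 0 0). rewrite Rmult_0_l, Rabs_R0, rpow_0, Rmult_0_l in H. auto.
Qed.

Lemma Nv_nonneg p kx ky kxy v : 0 <= Nv p kx ky kxy v.
Proof. apply rpow_ge0. Qed.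

Lemma Nv_zero p kx ky kxy v : 0 < p <= 1 -> 0 < kx -> 0 < ky -> 0 < kxy ->
  Nv p kx ky kxy v = 0 <-> v = zero.
Proof.
  intros Hp H1 H2 H3. destruct v as [a b]. unfold Nv; simpl. split.
  - intros H. apply rpow_eq0 in H; [|apply Mt_ge0].
    apply Mt_zero in H; auto. destruct H; subst. reflexivity.
  - intros H. injection H; intros; subst. change (rpow (Mt p kx ky kxy 0 0) (/ p) = 0).
    rewrite Mt_00. apply rpow_0.
Qed.

Lemma Nv_hom p kx ky kxy (t : R) (v : V) : 0 < p <= 1 ->
  Nv p kx ky kxy (scal t v) = Rabs t * Nv p kx ky kxy v.
Proof.
  intros Hp. destruct v as [a b]. unfold Nv.
  change (rpow (Mt p kx ky kxy (t * a) (t * b)) (/ p) = Rabs t * rpow (Mt p kx ky kxy a b) (/ p)).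
  rewrite Mt_hom, rpow_mult by (apply rpow_ge0 || apply Mt_ge0).
  rewrite rpow_inv by (lra || apply Rabs_pos). auto.
Qed.

Lemma Nv_p p kx ky kxy v : 0 < p <= 1 -> rpow (Nv p kx ky kxy v) p = Mt p kx ky kxy (fst v) (snd v).
Proof. intros Hp. unfold Nv. apply rpow_inv'. lra. apply Mt_ge0. Qed.

Lemma Nv_ptri p kx ky kxy (v w : V) : 0 < p <= 1 -> 0 <= kx -> 0 <= ky -> 0 <= kxy ->
  rpow (Nv p kx ky kxy (plus v w)) p <= rpow (Nv p kx ky kxy v) p + rpow (Nv p kx ky kxy w) p.
Proof.
  intros Hp H1 H2 H3. rewrite !Nv_p by auto. destruct v as [a b], w as [a' b'].
  change (Mt p kx ky kxy (a + a') (b + b') <= Mt p kx ky kxy a b + Mt p kx ky kxy a' b').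
  apply Mt_sub; auto.
Qed.

Lemma Nv_complete p kx ky kxy : 0 < p <= 1 -> 0 < kx -> 0 < ky -> 0 < kxy ->
  forall u : nat -> V,
      (forall eps, 0 < eps -> exists N : nat, forall m n : nat,
          (N <= m)%nat -> (N <= n)%nat -> Nv p kx ky kxy (minus (u m) (u n)) < eps) ->
      exists l, forall eps, 0 < eps -> exists N : nat, forall n : nat,
          (N <= n)%nat -> Nv p kx ky kxy (minus (u n) l) < eps.
Proof.
  intros Hp H1 H2 H3 u Hc.
  set (m := Rmin kx (Rmin ky kxy)).
  assert (Hm : 0 < m) by (unfold m; repeat apply Rmin_glb_lt; auto).
  assert (Hm1 : m <= kx /\ m <= ky /\ m <= kxy).
  { unfold m; pose proof (Rmin_l kx (Rmin ky kxy)); pose proof (Rmin_r kx (Rmin ky kxy));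
    pose proof (Rmin_l ky kxy); pose proof (Rmin_r ky kxy); lra. }
  assert (Hcoord : forall i j eta, 0 < eta -> Nv p kx ky kxy (minus (u i) (u j)) < eta * m ->
     Rabs (fst (u i) - fst (u j)) < eta /\ Rabs (snd (u i) - snd (u j)) < eta).
  { intros i j eta He H.
    assert (Hlt : rpow (Nv p kx ky kxy (minus (u i) (u j))) p < rpow (eta * m) p).
    { apply rpow_lt. lra. split. apply Nv_nonneg. auto. }
    rewrite Nv_p in Hlt by auto.
    destruct (Mt_lower p kx ky kxy m (fst (minus (u i) (u j))) (snd (minus (u i) (u j))) Hp) as [A B]; try lra.
    change (fst (minus (u i) (u j))) with (fst (u i) - fst (u j)) in A.
    change (snd (minus (u i) (u j))) with (snd (u i) - snd (u j)) in B.
    unfold Pk in A, B. rewrite Rabs_mult, (Rabs_pos_eq m) in A, B by lra.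
    split.
    - assert (Rabs (fst (u i) - fst (u j)) * m < eta * m).
      { apply rpow_lt_inv with p. lra. apply Rmult_le_pos. apply Rabs_pos. lra. nra. eapply Rle_lt_trans; [exact A || exact B | exact Hlt]. }
      apply Rmult_lt_reg_r with m; auto.
    - assert (Rabs (snd (u i) - snd (u j)) * m < eta * m).
      { apply rpow_lt_inv with p. lra. apply Rmult_le_pos. apply Rabs_pos. lra. nra. eapply Rle_lt_trans; [exact A || exact B | exact Hlt]. }
      apply Rmult_lt_reg_r with m; auto. }
  assert (CA : Cauchy_crit (fun n => fst (u n))).
  { intros eps He. destruct (Hc (eps * m)) as [N HN]. nra. exists N. intros i j Hi Hj.
    unfold Rdist. apply (Hcoord i j eps He). apply HN; lia. }
  assert (CB : Cauchy_crit (fun n => snd (u n))).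
  { intros eps He. destruct (Hc (eps * m)) as [N HN]. nra. exists N. intros i j Hi Hj.
    unfold Rdist. apply (Hcoord i j eps He). apply HN; lia. }
  destruct (Rcomplete.R_complete _ CA) as [la La].
  destruct (Rcomplete.R_complete _ CB) as [lb Lb].
  exists ((la, lb) : V). intros eps He.
  set (eta := rpow eps p).
  assert (Heta : 0 < eta) by (apply rpow_gt0; auto).
  set (d0 := rpow (eta / 2) (/ p)).
  assert (Hd0 : 0 < d0) by (apply rpow_gt0; lra).
  assert (Hd0p : rpow d0 p = eta / 2) by (apply rpow_inv'; lra).
  set (del := d0 / (kx + ky + 1)).
  assert (Hdel : 0 < del) by (unfold del; apply Rdiv_lt_0_compat; lra).
  assert (Small : forall x k, 0 < k -> k <= kx + ky -> Rabs x < del -> Pk p (x * k) < eta / 2).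
  { intros x k Hk Hk2 Hx. unfold Pk. rewrite <- Hd0p. apply rpow_lt. lra.
    split. apply Rabs_pos. rewrite Rabs_mult, (Rabs_pos_eq k) by lra.
    assert (Rabs x * (kx + ky + 1) < d0).
    { unfold del in Hx. apply Rmult_lt_compat_r with (r := kx + ky + 1) in Hx; [|lra].
      unfold Rdiv in Hx. rewrite Rmult_assoc, Rinv_l in Hx by lra. lra. }
    pose proof (Rabs_pos x). nra. }
  destruct (La del Hdel) as [Na HNa]. destruct (Lb del Hdel) as [Nb HNb].
  exists (Nat.max Na Nb). intros n Hn.
  assert (Ha : Rabs (fst (u n) - la) < del) by (apply HNa; lia).
  assert (Hb : Rabs (snd (u n) - lb) < del) by (apply HNb; lia).
  assert (HM : Mt p kx ky kxy (fst (u n) - la) (snd (u n) - lb) < eta).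
  { eapply Rle_lt_trans. unfold Mt. apply Rmin_l.
    pose proof (Small _ kx H1 ltac:(lra) Ha). pose proof (Small _ ky H2 ltac:(lra) Hb). lra. }
  unfold Nv. change (fst (minus (u n) (la, lb))) with (fst (u n) - la).
  change (snd (minus (u n) (la, lb))) with (snd (u n) - lb).
  rewrite <- (rpow_inv eps p) by lra.
  apply rpow_lt. apply Rinv_0_lt_compat; lra. split. apply Mt_ge0. auto.
Qed.

Definition Yspace p kx ky kxy (Hp : 0 < p <= 1) (H1 : 0 < kx) (H2 : 0 < ky) (H3 : 0 < kxy) : pBanach p :=
  mkPBanach p V (Nv p kx ky kxy) (Nv_nonneg p kx ky kxy)
    (fun v => Nv_zero p kx ky kxy v Hp H1 H2 H3)
    (fun t v => Nv_hom p kx ky kxy t v Hp)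
    (fun v w => Nv_ptri p kx ky kxy v w Hp (Rlt_le _ _ H1) (Rlt_le _ _ H2) (Rlt_le _ _ H3))
    (Nv_complete p kx ky kxy Hp H1 H2 H3).
Lemma modspace_id (K : Ring) (W : ModuleSpace K) (a b : K) (u w : W) :
  plus (scal a u) (scal b w) = plus (scal (plus a b) u) (scal b (minus w u)).
Proof.
  rewrite scal_distr_r, scal_minus_distr_l. unfold minus.
  rewrite <- !plus_assoc. f_equal.
  rewrite (plus_comm (scal b w)). rewrite plus_assoc.
  rewrite (@plus_opp_r (ModuleSpace.AbelianGroup K W)). rewrite plus_zero_l. reflexivity.
Qed.

Lemma comb_bound p (Y : pBanach p) (al be : R) (u w : Y) Du Dw : 0 < p <= 1 ->
  pb_norm Y u <= Du -> pb_norm Y w <= Dw ->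
  rpow (pb_norm Y (plus (scal al u) (scal be w))) p <= Pk p (al * Du) + Pk p (be * Dw).
Proof.
  intros Hp Hu Hw. eapply Rle_trans. apply pb_ptri. rewrite !pb_hom.
  pose proof (pb_nonneg p Y u). pose proof (pb_nonneg p Y w).
  unfold Pk. rewrite !Rabs_mult, (Rabs_pos_eq Du), (Rabs_pos_eq Dw) by lra.
  apply Rplus_le_compat; apply rpow_le; try lra; split;
    try (apply Rmult_le_pos; [apply Rabs_pos|lra]);
    apply Rmult_le_compat_l; auto; apply Rabs_pos.
Qed.

Lemma Rmin_glb' a b c : a <= b -> a <= c -> a <= Rmin b c.
Proof. intros. unfold Rmin. destruct (Rle_dec b c); auto. Qed.

Lemma Nv_pair p kx ky kxy a1 b1 a2 b2 :
  Nv p kx ky kxy (minus ((a1, b1) : V) ((a2, b2) : V)) = rpow (Mt p kx ky kxy (a1 - a2) (b1 - b2)) (/ p).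
Proof. reflexivity. Qed.

Lemma Nv_bnd p kx ky kxy a b D : 0 < p <= 1 -> 0 <= D -> Mt p kx ky kxy a b <= rpow D p ->
  rpow (Mt p kx ky kxy a b) (/ p) <= D.
Proof.
  intros Hp HD H. rewrite <- (rpow_inv D p) by lra. apply rpow_le.
  apply Rinv_0_lt_compat; lra. split; auto. apply Mt_ge0.
Qed.

Lemma Pk_pm1 p k : 0 <= k -> Pk p (1 * k) = rpow k p /\ Pk p (-1 * k) = rpow k p.
Proof.
  intros. unfold Pk. replace (-1 * k) with (- (1 * k)) by ring. rewrite Rabs_Ropp.
  rewrite Rmult_1_l, Rabs_pos_eq by auto. auto.
Qed.

Lemma Mt_T1 p kx ky kxy a b : Mt p kx ky kxy a b <= Pk p (a * kx) + Pk p (b * ky).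
Proof. apply Rmin_l. Qed.
Lemma Mt_T2 p kx ky kxy a b : Mt p kx ky kxy a b <= Pk p ((a + b) * kx) + Pk p (b * kxy).
Proof. eapply Rle_trans. apply Rmin_r. apply Rmin_l. Qed.

Theorem corollary2p7 (p : R) (T : Type) (d : T -> T -> R) (z x y : T) :
  0 < p -> p <= 1 ->
  is_pmetric p d ->
  x <> z -> y <> z -> x <> y ->
  (forall u : T, u = z \/ u = x \/ u = y) ->
  forall a b : R,
  exists r : R,
    Fp_norm p d z ((a, x) :: (b, y) :: nil) = Finite r /\ 0 <= r /\
    rpow r p =
      Rmin (rpow (Rabs (a * d x z)) p + rpow (Rabs (b * d y z)) p)
        (Rmin (rpow (Rabs ((a + b) * d x z)) p + rpow (Rabs (b * d x y)) p)
              (rpow (Rabs ((a + b) * d y z)) p + rpow (Rabs (a * d x y)) p)).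
Proof.
  intros Hp0 Hp1 [Dnn [Deq [Dsym _]]] Hxz Hyz Hxy Hall a b.
  assert (Hp : 0 < p <= 1) by lra.
  set (kx := d x z). set (ky := d y z). set (kxy := d x y).
  assert (H1 : 0 < kx). { destruct (Dnn x z) as [h|h]; auto. exfalso; apply Hxz, Deq; auto. }
  assert (H2 : 0 < ky). { destruct (Dnn y z) as [h|h]; auto. exfalso; apply Hyz, Deq; auto. }
  assert (H3 : 0 < kxy). { destruct (Dnn x y) as [h|h]; auto. exfalso; apply Hxy, Deq; auto. }
  change (Rmin _ _) with (Mt p kx ky kxy a b).
  set (M := Mt p kx ky kxy a b).
  assert (HM : 0 <= M) by apply Mt_ge0.
  set (r := rpow M (/ p)).
  assert (Hr : rpow r p = M) by (apply rpow_inv'; lra).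
  set (Y := Yspace p kx ky kxy Hp H1 H2 H3).
  set (f := fun u : T => if excluded_middle_informative (u = z) then ((0, 0) : V)
                         else if excluded_middle_informative (u = x) then ((1, 0) : V)
                         else ((0, 1) : V)).
  assert (fz : f z = (0, 0)).
  { unfold f. destruct (excluded_middle_informative (z = z)); congruence. }
  assert (fx : f x = (1, 0)).
  { unfold f. destruct (excluded_middle_informative (x = z)); try congruence.
    destruct (excluded_middle_informative (x = x)); congruence. }
  assert (fy : f y = (0, 1)).
  { unfold f. destruct (excluded_middle_informative (y = z)); try congruence.
    destruct (excluded_middle_informative (y = x)); congruence. }
  assert (Inset : Fp_values p d z ((a, x) :: (b, y) :: nil) r).
  { exists Y, (f : T -> Y). split; [|split].
    - rewrite fz. reflexivity.
    - intros u v. simpl pb_norm.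
      assert (Dself : forall w, d w w = 0) by (intros; apply Deq; auto).
      destruct (Hall u) as [ -> | [ -> | -> ]], (Hall v) as [ -> | [ -> | -> ]];
        rewrite ?fz, ?fx, ?fy, Nv_pair, ?Dself; apply Nv_bnd; auto; try lra; try apply Dnn;
        try (replace (0 - 0) with 0 by ring); try (replace (1 - 1) with 0 by ring);
        try (replace (1 - 0) with 1 by ring); try (replace (0 - 1) with (-1) by ring);
        try (rewrite Mt_00, rpow_0; lra);
        rewrite ?(Dsym z x), ?(Dsym z y), ?(Dsym y x); fold kx ky kxy.
      all: try first
        [ eapply Rle_trans; [apply Mt_T1|];
          rewrite ?Rmult_0_l, ?Pk_0, ?Rplus_0_l, ?Rplus_0_r;
          first [rewrite (proj1 (Pk_pm1 p _ (Rlt_le _ _ H1))) | rewrite (proj2 (Pk_pm1 p _ (Rlt_le _ _ H1)))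
                | rewrite (proj1 (Pk_pm1 p _ (Rlt_le _ _ H2))) | rewrite (proj2 (Pk_pm1 p _ (Rlt_le _ _ H2)))];
          lra
        | eapply Rle_trans; [apply Mt_T2|];
          try (replace (1 + -1) with 0 by ring); try (replace (-1 + 1) with 0 by ring);
          rewrite ?Rmult_0_l, ?Pk_0, ?Rplus_0_l, ?Rplus_0_r;
          first [rewrite (proj1 (Pk_pm1 p _ (Rlt_le _ _ H3))) | rewrite (proj2 (Pk_pm1 p _ (Rlt_le _ _ H3)))];
          lra ].
    - simpl eval_comb. rewrite fx, fy. simpl pb_norm.
      assert (E : (plus (scal a ((1,0):V)) (plus (scal b ((0,1):V)) zero)) = ((a,b):V)).
      { apply injective_projections; cbn; ring. }
      rewrite E. reflexivity. }
  exists r. split; [|split].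
  - unfold Fp_norm. apply is_lub_Rbar_unique. split.
    + intros s [Y' [g [gz [gL Hs]]]]. simpl. subst s.
      apply rpow_le_inv with p; try lra. apply pb_nonneg. unfold r; apply rpow_ge0.
      rewrite Hr. unfold M, Mt.
      simpl eval_comb. rewrite plus_zero_r.
      assert (Bx : pb_norm Y' (g x) <= kx).
      { pose proof (gL x z) as h. rewrite gz, (@minus_zero_r (ModuleSpace.AbelianGroup _ (pb_space p Y'))) in h. auto. }
      assert (By : pb_norm Y' (g y) <= ky).
      { pose proof (gL y z) as h. rewrite gz, (@minus_zero_r (ModuleSpace.AbelianGroup _ (pb_space p Y'))) in h. auto. }
      assert (Bxy : pb_norm Y' (minus (g y) (g x)) <= kxy).
      { pose proof (gL y x) as h. rewrite Dsym in h. auto. }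
      assert (Byx : pb_norm Y' (minus (g x) (g y)) <= kxy).
      { pose proof (gL x y) as h. auto. }
      apply Rmin_glb'; [|apply Rmin_glb'].
      * apply comb_bound; auto.
      * rewrite modspace_id. apply comb_bound; auto.
      * rewrite plus_comm, modspace_id. rewrite (Rplus_comm a b). apply comb_bound; auto.
    + intros bb Hub. apply Hub. exact Inset.
  - unfold r; apply rpow_ge0.
  - exact Hr.
Qed.
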